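(* Let $q\in\mathbb{C}$ with $0<|q|<1$, and let $a,b,c,d,e$ be complex numbers such that at least one of $a$, $b$, $c$ is of the form $q^n$ with $n\in\{1,2,\ldots\}$ (and such that all terms below are well defined). Then \[ \sum_{k=-\infty}^\infty \frac{(q/a,q/b,q/c,q/d,q/e)_k}{(a,bq,cq,dq,eq)_k}(abcde)^k =\frac{a\,(q,ab,bc,ac)_\infty}{q\,(a,bq,cq,abc/q)_\infty} \sum_{k=0}^\infty\frac{(q/a,q/b,q/c,de)_k}{(q,q^2/abc,dq,eq)_k}q^k. \]
   Context: For an integer $n$, the $q$-shifted factorial is $(a)_n=(a;q)_n$ with $(a)_0=1$, $(a)_n=(1-a)(1-aq)\cdots(1-aq^{n-1})$ for $n\ge1$, and $(a)_n=[(1-aq^{-1})(1-aq^{-2})\cdots(1-aq^{n})]^{-1}$ for $n\le -1$. Also $(a_1,\ldots,a_m)_n=(a_1)_n\cdots(a_m)_n$ and $(a_1,\ldots,a_m)_\infty=\lim_{n\to\infty}(a_1,\ldots,a_m)_n$. *)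

(* Defs.v *)
From Stdlib Require Import Reals ZArith.
From Coquelicot Require Export Coquelicot.

Open Scope C_scope.

Fixpoint cpow (x : C) (n : nat) : C :=
  match n with O => 1 | S m => cpow x m * x end.

Fixpoint prodpos (a q : C) (n : nat) : C :=
  match n with O => 1 | S m => prodpos a q m * (1 - a * cpow q m) end.

Fixpoint prodneg (a q : C) (n : nat) : C :=
  match n with O => 1 | S m => prodneg a q m * (1 - a / cpow q (S m)) end.

Definition qpoch (a q : C) (n : Z) : C :=
  match n with
  | Z0 => 1
  | Zpos p => prodpos a q (Pos.to_nat p)
  | Zneg p => / prodneg a q (Pos.to_nat p)
  end.

(* the reciprocal 1/(a;q)_n, written out without a division for n <= 0
   (so that a vanishing factor of prodneg makes the reciprocal 0, i.e.
   (a;q)_n = infinity, which is how the bilateral series terminates) *)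
Definition qpoch_rec (a q : C) (n : Z) : C :=
  match n with
  | Z0 => 1
  | Zpos p => / prodpos a q (Pos.to_nat p)
  | Zneg p => prodneg a q (Pos.to_nat p)
  end.

Definition qpoch_inf (a q : C) : C :=
  (real (Lim_seq (fun n => fst (prodpos a q n))),
   real (Lim_seq (fun n => snd (prodpos a q n)))).

Definition zpow (x : C) (k : Z) : C :=
  match k with
  | Z0 => 1
  | Zpos p => cpow x (Pos.to_nat p)
  | Zneg p => / cpow x (Pos.to_nat p)
  end.

Definition is_bilateral_series (f : Z -> C) (l : C) : Prop :=
  exists l1 l2 : C,
    is_series (fun n : nat => f (Z.of_nat n)) l1 /\
    is_series (fun n : nat => f (- Z.of_nat (S n))%Z) l2 /\
    l = l1 + l2.

(* Main.v *)
Require Import Defs.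
From Stdlib Require Import Reals ZArith Lia Lra.
From Coquelicot Require Import Coquelicot.
Open Scope C_scope.


Lemma C1_neq_0 : (1 : C) <> 0.
Proof. intro H. apply (f_equal fst) in H. simpl in H. lra. Qed.

Fixpoint csum (f : nat -> C) (n : nat) : C :=
  match n with O => 0 | S m => csum f m + f m end.

Lemma csum_ext (f g : nat -> C) n : (forall i, (i < n)%nat -> f i = g i) -> csum f n = csum g n.
Proof. induction n; simpl; intros H; auto. rewrite IHn; [|intros; apply H; lia]. rewrite H; auto. Qed.

Lemma csum_plus (f g : nat -> C) n : csum (fun i => f i + g i) n = csum f n + csum g n.
Proof. induction n; simpl. ring. rewrite IHn; ring. Qed.

Lemma csum_scal (c : C) (f : nat -> C) n : csum (fun i => c * f i) n = c * csum f n.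
Proof. induction n; simpl. ring. rewrite IHn; ring. Qed.

Lemma csum_zero (f : nat -> C) n : (forall i, (i < n)%nat -> f i = 0) -> csum f n = 0.
Proof. induction n; simpl; intros H; auto. rewrite IHn, H; [ring|lia|intros; apply H; lia]. Qed.

Lemma csum_swap (F : nat -> nat -> C) n m :
  csum (fun i => csum (fun j => F i j) m) n = csum (fun j => csum (fun i => F i j) n) m.
Proof.
  induction n; simpl.
  - symmetry; apply csum_zero; auto.
  - rewrite IHn. rewrite <- csum_plus. reflexivity.
Qed.

Lemma csum_extend (f : nat -> C) n m : (forall i, (n <= i)%nat -> f i = 0) -> (n <= m)%nat -> csum f m = csum f n.
Proof. intros H Hm. induction Hm; simpl; auto. rewrite IHHm, H; [ring|lia]. Qed.

Lemma csum_telescope (f g G : nat -> C) (r : C) n :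
  (forall i, (i < n)%nat -> f i - r * g i = G (S i) - G i) ->
  csum f n - r * csum g n = G n - G O.
Proof.
  induction n; simpl; intros H. ring.
  assert (H1 := H n (Nat.lt_succ_diag_r n)).
  assert (H2 : csum f n - r * csum g n = G n - G O) by (apply IHn; intros; apply H; lia).
  transitivity ((csum f n - r * csum g n) + (f n - r * g n)). ring.
  rewrite H1, H2; ring.
Qed.

Lemma cpow_add (x : C) m n : cpow x (m + n) = cpow x m * cpow x n.
Proof. induction n; simpl. rewrite Nat.add_0_r; ring. rewrite Nat.add_succ_r; simpl; rewrite IHn; ring. Qed.

Lemma cpow_mult (x y : C) n : cpow (x * y) n = cpow x n * cpow y n.
Proof. induction n; simpl. ring. rewrite IHn; ring. Qed.

Lemma cpow_nz (x : C) n : x <> 0 -> cpow x n <> 0.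
Proof. intros Hx; induction n; simpl. apply C1_neq_0. apply Cmult_neq_0; [exact IHn | exact Hx]. Qed.

Lemma Cmod_cpow (x : C) n : Cmod (cpow x n) = (Cmod x ^ n)%R.
Proof. induction n; simpl. apply Cmod_1. rewrite Cmod_mult, IHn; ring. Qed.

Lemma cpow_ne1 (q : C) n : (Cmod q < 1)%R -> (1 <= n)%nat -> cpow q n <> 1.
Proof.
  intros Hq Hn H. assert (Cmod (cpow q n) = 1%R) by (rewrite H; apply Cmod_1).
  rewrite Cmod_cpow in H0. assert (Cmod q ^ n < 1)%R.
  { apply pow_lt_1_compat. split. apply Cmod_ge_0. auto. lia. }
  lra.
Qed.


Lemma pp_S (x q : C) n : prodpos x q (S n) = prodpos x q n * (1 - x * cpow q n).
Proof. reflexivity. Qed.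

Lemma pp_shift (x q : C) n : prodpos x q (S n) = (1 - x) * prodpos (x * q) q n.
Proof.
  induction n. simpl. ring.
  rewrite pp_S, IHn. simpl. ring.
Qed.

Lemma pp_add (x q : C) m n : prodpos x q (m + n) = prodpos x q m * prodpos (x * cpow q m) q n.
Proof.
  induction n. simpl. rewrite Nat.add_0_r; ring.
  rewrite Nat.add_succ_r, !pp_S, IHn, cpow_add. ring.
Qed.

Lemma pp_arg (x y q : C) n : x = y -> prodpos x q n = prodpos y q n.
Proof. intros ->; auto. Qed.

Lemma pp_nz_S (x q : C) n : prodpos x q (S n) <> 0 -> prodpos x q n <> 0 /\ 1 - x * cpow q n <> 0.
Proof. rewrite pp_S. intros H; split; intro E; apply H; rewrite E; ring. Qed.

Lemma pp_nz_le (x q : C) n m : (m <= n)%nat -> prodpos x q n <> 0 -> prodpos x q m <> 0.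
Proof. induction 1; auto. intros H0; apply IHle, (pp_nz_S _ _ _ H0). Qed.

Lemma pp_zero (x q : C) n m : 1 - x * cpow q m = 0 -> (m < n)%nat -> prodpos x q n = 0.
Proof.
  intros H Hmn. induction Hmn. rewrite pp_S, H; ring.
  rewrite pp_S, IHHmn; ring.
Qed.

Lemma one_minus_0 (z : C) : 1 - z = 0 -> z = 1.
Proof. intros H. replace z with (1 - (1 - z)) by ring. rewrite H; ring. Qed.

Lemma omp_nz (q : C) n : (Cmod q < 1)%R -> (1 <= n)%nat -> 1 - cpow q n <> 0.
Proof. intros H1 H2 E. apply (cpow_ne1 q n H1 H2). apply one_minus_0; auto. Qed.

Lemma ompi_nz (q : C) n : q <> 0 -> (Cmod q < 1)%R -> (1 <= n)%nat -> 1 - / cpow q n <> 0.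
Proof.
  intros H0 H1 H2 E. apply (cpow_ne1 q n H1 H2).
  apply one_minus_0 in E. assert (Hx := cpow_nz q n H0).
  assert (H : cpow q n * / cpow q n = 1) by (field; auto).
  rewrite E, Cmult_1_r in H. exact H.
Qed.

Ltac nz1 :=
  match goal with
  | |- not (@eq C ?a ?z) =>
      first [ assumption | apply C1_neq_0 | apply cpow_nz; assumption
            | match goal with H : not (@eq C ?b z) |- _ =>
                let E := fresh in intro E; apply H;
                first [ transitivity a; [ring | exact E]
                      | transitivity (- a); [ring | rewrite E; ring] ] end ]
  end.
Ltac nz := cbv beta; repeat split; nz1.

Ltac cring := unfold Cdiv; ring.

Lemma csum_S (f : nat -> C) n : csum f (S n) = csum f n + f n.
Proof. reflexivity. Qed.

Lemma pp_qpow_nz (q : C) m N : q <> 0 -> (Cmod q < 1)%R -> (1 <= m)%nat -> prodpos (cpow q m) q N <> 0.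
Proof.
  intros Hq Hq1 Hm. induction N. simpl. apply C1_neq_0.
  rewrite pp_S. apply Cmult_neq_0. exact IHN.
  rewrite <- cpow_add. apply omp_nz; auto. lia.
Qed.

Lemma ppq_nz (q : C) N : q <> 0 -> (Cmod q < 1)%R -> prodpos q q N <> 0.
Proof.
  intros Hq Hq1. rewrite (pp_arg q (cpow q 1)) by (simpl; ring).
  apply pp_qpow_nz; auto.
Qed.


Definition hh (q d e : C) j := prodpos (d*e) q j / (prodpos (d*q) q j * prodpos (e*q) q j).
Definition alpha (q : C) k j := prodpos (/cpow q k) q j * prodpos (cpow q (S k)) q j * cpow q j / prodpos q q j.
Definition ff (q d e : C) k := prodpos (q/d) q k * prodpos (q/e) q k * cpow (d*e) k / (prodpos (d*q) q k * prodpos (e*q) q k).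
Definition rho3 (q d e : C) k := (1 - q/d*cpow q k)*(1 - q/e*cpow q k)*(d*e) / ((1 - d*q*cpow q k)*(1 - e*q*cpow q k)).
Definition G3 (q d e : C) k j :=
  (1 + cpow q k * q) / ((1 - d*(cpow q k*q)) * (1 - e*(cpow q k * q))) *
  (1 - cpow q j) * (1 - d*cpow q j) * (1 - e * cpow q j) *
  prodpos (/(cpow q k * q)) q j * prodpos (cpow q k * q) q j * prodpos (d*e) q j /
  ((1 - /(cpow q k * q)) * prodpos q q j * prodpos (d*q) q j * prodpos (e*q) q j).

Lemma pp_shift_eq (x q : C) j : 1 - x <> 0 ->
  prodpos (x*q) q j = prodpos x q j * (1 - x * cpow q j) / (1 - x).
Proof. intros H. rewrite <- pp_S, pp_shift. field. auto. Qed.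

Lemma cert3 (q d e : C) k j :
  q <> 0 -> d <> 0 -> e <> 0 -> (Cmod q < 1)%R ->
  prodpos q q (S j) <> 0 -> prodpos (d*q) q (S j) <> 0 -> prodpos (e*q) q (S j) <> 0 ->
  1 - d*q*cpow q k <> 0 -> 1 - e*q*cpow q k <> 0 ->
  alpha q (S k) j * hh q d e j - rho3 q d e k * (alpha q k j * hh q d e j)
  = G3 q d e k (S j) - G3 q d e k j.
Proof.
  intros Hq Hd He Hq1 H4 H5 H6 Hdk Hek.
  destruct (pp_nz_S _ _ _ H4) as [P4 Q4].
  destruct (pp_nz_S _ _ _ H5) as [P5 Q5].
  destruct (pp_nz_S _ _ _ H6) as [P6 Q6].
  assert (HX : cpow q k <> 0) by (apply cpow_nz; auto).
  assert (HY : cpow q j <> 0) by (apply cpow_nz; auto).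
  assert (HXq : 1 - cpow q k * q <> 0) by (apply (omp_nz q (S k)); auto; lia).
  assert (HXqi : 1 - / (cpow q k * q) <> 0) by (apply (ompi_nz q (S k)); auto; lia).
  unfold alpha, hh, rho3, G3.
  assert (E1 : prodpos (/ cpow q k) q j =
     prodpos (/ (cpow q k * q)) q j * (1 - / (cpow q k * q) * cpow q j) / (1 - / (cpow q k * q))).
  { rewrite <- pp_shift_eq by auto. apply pp_arg. field. auto. }
  assert (E2 : prodpos (cpow q (S (S k))) q j =
     prodpos (cpow q k * q) q j * (1 - cpow q k * q * cpow q j) / (1 - cpow q k * q)).
  { rewrite <- pp_shift_eq by auto. reflexivity. }
  rewrite E1, E2. rewrite !pp_S. simpl cpow.
  field.
  nz.
Qed.

Lemma alpha_zero (q : C) k j : q <> 0 -> (k < j)%nat -> alpha q k j = 0.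
Proof.
  intros Hq H. unfold alpha. rewrite (pp_zero (/ cpow q k) q j k). cring.
  field. apply cpow_nz; auto. auto.
Qed.

Lemma G3_0 (q d e : C) k : G3 q d e k 0 = 0.
Proof. unfold G3. simpl cpow. cring. Qed.

Lemma G3_end (q d e : C) k : q <> 0 -> G3 q d e k (S (S k)) = 0.
Proof.
  intros Hq. unfold G3. rewrite (pp_zero (/ (cpow q k * q)) q (S (S k)) (S k)). cring.
  simpl cpow. field. split; auto. apply cpow_nz; auto. lia.
Qed.

Lemma ff_S (q d e : C) k : q <> 0 -> d <> 0 -> e <> 0 ->
  prodpos (d*q) q (S k) <> 0 -> prodpos (e*q) q (S k) <> 0 ->
  ff q d e (S k) = rho3 q d e k * ff q d e k.
Proof.
  intros Hq Hd He H5 H6.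
  destruct (pp_nz_S _ _ _ H5) as [P5 Q5].
  destruct (pp_nz_S _ _ _ H6) as [P6 Q6].
  unfold ff, rho3. rewrite !pp_S. simpl cpow. field. nz.
Qed.

Lemma ff_expand (q d e : C) k :
  q <> 0 -> d <> 0 -> e <> 0 -> (Cmod q < 1)%R ->
  (forall m, prodpos q q m <> 0) -> (forall m, prodpos (d*q) q m <> 0) ->
  (forall m, prodpos (e*q) q m <> 0) ->
  ff q d e k = csum (fun j => alpha q k j * hh q d e j) (S k).
Proof.
  intros Hq Hd He Hq1 H4 H5 H6.
  induction k.
  - unfold ff, alpha, hh. simpl. field.
  - rewrite ff_S by auto. rewrite IHk.
    assert (Ht := csum_telescope (fun j => alpha q (S k) j * hh q d e j)
               (fun j => alpha q k j * hh q d e j) (G3 q d e k) (rho3 q d e k) (S (S k))).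
    rewrite G3_0, G3_end in Ht by auto.
    assert (Hz : csum (fun j => alpha q k j * hh q d e j) (S (S k)) =
                 csum (fun j => alpha q k j * hh q d e j) (S k)).
    { rewrite (csum_S _ (S k)). rewrite (alpha_zero q k (S k) Hq (Nat.lt_succ_diag_r k)). ring. }
    rewrite Hz in Ht.
    assert (Ht' : csum (fun j => alpha q (S k) j * hh q d e j) (S (S k)) -
         rho3 q d e k * csum (fun j => alpha q k j * hh q d e j) (S k) = 0).
    { rewrite Ht. ring. intros i _. apply cert3; auto.
      - destruct (pp_nz_S _ _ _ (H5 (S k))) as [_ Q]. intro E; apply Q; rewrite <- E; ring.
      - destruct (pp_nz_S _ _ _ (H6 (S k))) as [_ Q]. intro E; apply Q; rewrite <- E; ring. }
    set (A1 := csum (fun j => alpha q (S k) j * hh q d e j) (S (S k))) in *.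
    set (A0 := csum (fun j => alpha q k j * hh q d e j) (S k)) in *.
    transitivity (rho3 q d e k * A0 + (A1 - rho3 q d e k * A0)). rewrite Ht'; ring. ring.
Qed.


Definition vv (q A B C : C) k :=
  (1 - cpow q k * cpow q k * q) / cpow q (S k) *
  prodpos (q/A) q k * prodpos (q/B) q k * prodpos (q/C) q k * cpow (A*B*C) k /
  (prodpos (A*q) q k * prodpos (B*q) q k * prodpos (C*q) q k).
Definition cc (q A B C : C) j :=
  prodpos (q/A) q j * prodpos (q/B) q j * prodpos (q/C) q j * cpow q j /
  (prodpos q q j * prodpos (q*q/(A*B*C)) q j).
Definition rho2 (q A B C : C) j :=
  (1 - q/A*cpow q j)*(1 - q/B*cpow q j)*(1 - q/C*cpow q j)*q /
  ((1 - q*cpow q j)*(1 - q*q/(A*B*C)*cpow q j)).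
Definition G2 (q A B C : C) j k :=
  cpow q j * q * q * q / (A*B*C*(1 - cpow q j * q)*(1 - cpow q j * q * q/(A*B*C))) / cpow q (S k) *
  prodpos (q/A) q k * prodpos (q/B) q k * prodpos (q/C) q k * cpow (A*B*C) k *
  (1 - A*cpow q k)*(1 - B*cpow q k)*(1 - C*cpow q k) /
  (prodpos (A*q) q k * prodpos (B*q) q k * prodpos (C*q) q k) *
  alpha q k j * (1 - cpow q j / cpow q k).

Lemma cert2 (q A B C : C) j k :
  q <> 0 -> A <> 0 -> B <> 0 -> C <> 0 -> (Cmod q < 1)%R ->
  prodpos q q (S j) <> 0 -> prodpos (q*q/(A*B*C)) q (S j) <> 0 ->
  prodpos (A*q) q (S k) <> 0 -> prodpos (B*q) q (S k) <> 0 -> prodpos (C*q) q (S k) <> 0 ->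
  vv q A B C k * alpha q k (S j) - rho2 q A B C j * (vv q A B C k * alpha q k j)
  = G2 q A B C j (S k) - G2 q A B C j k.
Proof.
  intros Hq HA HB HC Hq1 H4 H7 Ha Hb Hc.
  destruct (pp_nz_S _ _ _ H4) as [P4 Q4].
  destruct (pp_nz_S _ _ _ H7) as [P7 Q7].
  destruct (pp_nz_S _ _ _ Ha) as [Pa Qa].
  destruct (pp_nz_S _ _ _ Hb) as [Pb Qb].
  destruct (pp_nz_S _ _ _ Hc) as [Pc Qc].
  assert (HX : cpow q k <> 0) by (apply cpow_nz; auto).
  assert (HY : cpow q j <> 0) by (apply cpow_nz; auto).
  assert (HXq : 1 - cpow q k * q <> 0) by (apply (omp_nz q (S k)); auto; lia).
  assert (HXqi : 1 - / (cpow q k * q) <> 0) by (apply (ompi_nz q (S k)); auto; lia).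
  assert (HYq : 1 - cpow q j * q <> 0) by (intro E; apply Q4; rewrite <- E; ring).
  assert (HYq2 : 1 - cpow q j * q * q / (A*B*C) <> 0) by (intro E; apply Q7; rewrite <- E; field; auto).
  assert (HABC : A*B*C - cpow q j * q * q <> 0).
  { intro E; apply HYq2.
    replace (1 - cpow q j * q * q / (A*B*C)) with ((A*B*C - cpow q j * q * q)/(A*B*C)).
    rewrite E; cring. field. nz. }
  unfold G2, vv, alpha, rho2.
  assert (E1 : prodpos (/ cpow q k) q j =
     prodpos (/ (cpow q k * q)) q j * (1 - / (cpow q k * q) * cpow q j) / (1 - / (cpow q k * q))).
  { rewrite <- pp_shift_eq by auto. apply pp_arg. field. auto. }
  assert (E2 : prodpos (cpow q (S (S k))) q j =
     prodpos (cpow q k * q) q j * (1 - cpow q k * q * cpow q j) / (1 - cpow q k * q)).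
  { rewrite <- pp_shift_eq by auto. reflexivity. }
  rewrite E2. rewrite !pp_S. simpl cpow. rewrite E1.
  field.
  nz.
Qed.

Definition RR1 (q A B C : C) :=
  (1 - A*q)*(1 - B*C*(A/q)) / ((1 - B*A)*(1 - C*A)).
Definition G1 (q A B C : C) k :=
  - (1 - A*q) / ((1 - B*A)*(1 - C*A)) / (1 - /A) *
  (1 - B*cpow q k)*(1 - C*cpow q k)*(1 - / cpow q k) / q *
  prodpos (q/(A*q)) q k * prodpos (q/B) q k * prodpos (q/C) q k * cpow (A*B*C) k /
  (prodpos (A*q) q k * prodpos (B*q) q k * prodpos (C*q) q k).

Lemma cert1 (q A B C : C) k :
  q <> 0 -> A <> 0 -> B <> 0 -> C <> 0 -> 1 - A <> 0 -> 1 - A * q <> 0 ->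
  1 - B*A <> 0 -> 1 - C*A <> 0 ->
  prodpos (A*q) q (S k) <> 0 -> prodpos (B*q) q (S k) <> 0 -> prodpos (C*q) q (S k) <> 0 ->
  vv q (A*q) B C k - RR1 q A B C * vv q A B C k = G1 q A B C (S k) - G1 q A B C k.
Proof.
  intros Hq HA HB HC HA1 HAq HBA HCA Ha Hb Hc.
  destruct (pp_nz_S _ _ _ Ha) as [Pa Qa].
  destruct (pp_nz_S _ _ _ Hb) as [Pb Qb].
  destruct (pp_nz_S _ _ _ Hc) as [Pc Qc].
  assert (HX : cpow q k <> 0) by (apply cpow_nz; auto).
  assert (HAi : 1 - /A <> 0).
  { intro E. apply HA1. apply one_minus_0 in E.
    assert (H : A * / A = 1) by (field; auto). rewrite E in H. rewrite <- H; ring. }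
  assert (HAi' : 1 - q/(A*q) <> 0) by (intro E; apply HAi; rewrite <- E; field; auto).
  unfold G1, vv, RR1.
  assert (E1 : prodpos (q/A) q k =
     prodpos (q/(A*q)) q k * (1 - q/(A*q) * cpow q k) / (1 - q/(A*q))).
  { rewrite <- pp_shift_eq by auto. apply pp_arg. field. auto. }
  assert (E2 : prodpos (A*q*q) q k =
     prodpos (A*q) q k * (1 - A * q * cpow q k) / (1 - A*q)).
  { rewrite <- pp_shift_eq by auto. reflexivity. }
  assert (E3 : cpow (A*q*B*C) k = cpow (A*B*C) k * cpow q k).
  { rewrite <- cpow_mult. f_equal. ring. }
  rewrite E1, E2, E3. rewrite !pp_S. simpl cpow.
  field.
  nz.
Qed.


Definition QQ (q B C : C) n :=
  prodpos q q (S n) * prodpos (B*C) q n / (q * prodpos (B*q) q n * prodpos (C*q) q n).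

Lemma vv_end (q B C : C) n : q <> 0 -> vv q (cpow q (S n)) B C (S n) = 0.
Proof.
  intros Hq. unfold vv. rewrite (pp_zero (q / cpow q (S n)) q (S n) n); [cring | | lia].
  simpl cpow. field; nz.
Qed.

Lemma S0 (q B C : C) n :
  q <> 0 -> (Cmod q < 1)%R -> B <> 0 -> C <> 0 ->
  (forall m, prodpos (B*q) q m <> 0) -> (forall m, prodpos (C*q) q m <> 0) ->
  csum (fun k => vv q (cpow q (S n)) B C k) (S n) = QQ q B C n.
Proof.
  intros Hq Hq1 HB HC Hb Hc.
  induction n.
  - simpl. unfold vv, QQ. simpl. field; nz.
  - set (A := cpow q (S n)) in *.
    assert (HA : A <> 0) by (apply cpow_nz; auto).
    assert (HA1 : 1 - A <> 0) by (apply omp_nz; auto; lia).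
    assert (HAq : 1 - A * q <> 0) by (apply (omp_nz q (S (S n))); auto; lia).
    assert (HBA : 1 - B * A <> 0).
    { destruct (pp_nz_S _ _ _ (Hb (S n))) as [_ Q]. intro E; apply Q. rewrite <- E. unfold A; simpl; ring. }
    assert (HCA : 1 - C * A <> 0).
    { destruct (pp_nz_S _ _ _ (Hc (S n))) as [_ Q]. intro E; apply Q. rewrite <- E. unfold A; simpl; ring. }
    assert (Ht := csum_telescope (fun k => vv q (A*q) B C k) (fun k => vv q A B C k)
               (G1 q A B C) (RR1 q A B C) (S (S n))).
    assert (G0 : G1 q A B C 0 = 0).
    { unfold G1. simpl cpow. replace (1 - / 1) with (RtoC 0) by (field; apply C1_neq_0). cring. }
    assert (Gend : G1 q A B C (S (S n)) = 0).
    { unfold G1. rewrite (pp_zero (q / (A * q)) q (S (S n)) (S n)); [cring | | lia].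
      unfold A. field; nz. }
    rewrite G0, Gend in Ht.
    rewrite (csum_S (fun k => vv q A B C k) (S n)) in Ht.
    unfold A in Ht. rewrite vv_end in Ht by auto. fold A in Ht.
    rewrite IHn in Ht.
    change (cpow q (S (S n))) with (A * q).
    assert (Ht' : csum (fun k : nat => vv q (A * q) B C k) (S (S n)) - RR1 q A B C * (QQ q B C n + 0) = 0).
    { rewrite Ht. ring. intros i _. apply cert1; auto.
      apply (pp_qpow_nz q (S (S n))); auto; lia. }
    set (S1 := csum (fun k : nat => vv q (A * q) B C k) (S (S n))) in *.
    transitivity (RR1 q A B C * (QQ q B C n + 0) + (S1 - RR1 q A B C * (QQ q B C n + 0))). ring.
    rewrite Ht'. unfold RR1, QQ. rewrite !pp_S. unfold A. simpl cpow.
    destruct (pp_nz_S _ _ _ (Hb (S n))) as [Pb Qb].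
    destruct (pp_nz_S _ _ _ (Hc (S n))) as [Pc Qc].
    assert (P4 : prodpos q q (S n) <> 0) by (apply ppq_nz; auto).
    field. nz.
Qed.

Lemma G2_0 (q A B C : C) j : G2 q A B C j 0 = 0.
Proof.
  unfold G2. destruct j.
  - simpl cpow. replace (1 - 1 / 1) with (RtoC 0) by (field; apply C1_neq_0). cring.
  - unfold alpha. rewrite (pp_zero (/ cpow q 0) q (S j) 0); [cring | | lia].
    simpl. field; try nz.
Qed.

Lemma G2_end (q B C : C) j n : q <> 0 -> G2 q (cpow q (S n)) B C j (S n) = 0.
Proof.
  intros Hq. unfold G2. rewrite (pp_zero (q / cpow q (S n)) q (S n) n); [cring | | lia].
  simpl cpow. field; nz.
Qed.

Lemma core12 (q B C : C) n j :
  q <> 0 -> (Cmod q < 1)%R -> B <> 0 -> C <> 0 ->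
  (forall m, prodpos (B*q) q m <> 0) -> (forall m, prodpos (C*q) q m <> 0) ->
  (forall m, prodpos (q*q/(cpow q (S n)*B*C)) q m <> 0) ->
  csum (fun k => vv q (cpow q (S n)) B C k * alpha q k j) (S n) = QQ q B C n * cc q (cpow q (S n)) B C j.
Proof.
  intros Hq Hq1 HB HC Hb Hc H7.
  set (A := cpow q (S n)).
  assert (HA : A <> 0) by (apply cpow_nz; auto).
  induction j.
  - rewrite (csum_ext _ (fun k => vv q A B C k));
    [ unfold A; rewrite S0 by auto; unfold cc; simpl; field; try nz
    | intros i _; unfold alpha; simpl; field; try nz ].
  - assert (Ht := csum_telescope (fun k => vv q A B C k * alpha q k (S j))
               (fun k => vv q A B C k * alpha q k j) (G2 q A B C j) (rho2 q A B C j) (S n)).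
    rewrite G2_0 in Ht. unfold A in Ht. rewrite G2_end in Ht by auto. fold A in Ht.
    rewrite IHj in Ht.
    assert (Ht' : csum (fun k => vv q A B C k * alpha q k (S j)) (S n) -
                  rho2 q A B C j * (QQ q B C n * cc q A B C j) = 0).
    { rewrite Ht. ring. intros i _. apply cert2; auto.
      apply ppq_nz; auto.
      unfold A. apply (pp_qpow_nz q (S (S n))); auto; lia. }
    set (S1 := csum (fun k => vv q A B C k * alpha q k (S j)) (S n)) in *.
    transitivity (rho2 q A B C j * (QQ q B C n * cc q A B C j) +
        (S1 - rho2 q A B C j * (QQ q B C n * cc q A B C j))). ring.
    rewrite Ht'. unfold rho2, cc. rewrite !pp_S.
    destruct (pp_nz_S _ _ _ (H7 (S j))) as [P7 Q7].
    assert (P4 : prodpos q q (S j) <> 0) by (apply ppq_nz; auto).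
    destruct (pp_nz_S _ _ _ P4) as [P4' Q4].
    unfold A in *.
    assert (HABC : cpow q n * B * C - q * cpow q j <> 0).
    { intro E; apply Q7.
      replace (1 - q*q/(cpow q (S n)*B*C)*cpow q j) with ((cpow q n*B*C - q*cpow q j)/(cpow q n*B*C)).
      rewrite E; cring. simpl. field. nz. }
    simpl cpow. field. nz.
Qed.

Lemma core_main (q B C d e : C) n :
  q <> 0 -> (Cmod q < 1)%R -> B <> 0 -> C <> 0 -> d <> 0 -> e <> 0 ->
  (forall m, prodpos (B*q) q m <> 0) -> (forall m, prodpos (C*q) q m <> 0) ->
  (forall m, prodpos (d*q) q m <> 0) -> (forall m, prodpos (e*q) q m <> 0) ->
  (forall m, prodpos (q*q/(cpow q (S n)*B*C)) q m <> 0) ->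
  csum (fun k => vv q (cpow q (S n)) B C k * ff q d e k) (S n) =
  QQ q B C n * csum (fun j => cc q (cpow q (S n)) B C j * hh q d e j) (S n).
Proof.
  intros Hq Hq1 HB HC Hd He Hb Hc Hdd Hee H7.
  assert (H4 : forall m, prodpos q q m <> 0) by (intros; apply ppq_nz; auto).
  rewrite (csum_ext _ (fun k => csum (fun j => vv q (cpow q (S n)) B C k * (alpha q k j * hh q d e j)) (S n))).
  rewrite csum_swap.
  rewrite <- csum_scal. apply csum_ext. intros j _.
  rewrite (csum_ext _ (fun k => (vv q (cpow q (S n)) B C k * alpha q k j) * hh q d e j)).
  rewrite (csum_ext (fun k => (vv q (cpow q (S n)) B C k * alpha q k j) * hh q d e j)
              (fun k => hh q d e j * (vv q (cpow q (S n)) B C k * alpha q k j))).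
  rewrite csum_scal. rewrite core12 by auto. ring.
  intros; ring. intros; ring.
  intros k Hk. rewrite ff_expand by auto. rewrite csum_scal.
  f_equal. symmetry. apply (csum_extend (fun j => alpha q k j * hh q d e j) (S k) (S n)).
  intros i Hi. rewrite alpha_zero by (auto; lia). ring. lia.
Qed.


Lemma qpoch_pos (x q : C) k : qpoch x q (Z.of_nat k) = prodpos x q k.
Proof. destruct k. reflexivity. simpl. rewrite SuccNat2Pos.id_succ. reflexivity. Qed.
Lemma qpoch_neg (x q : C) k : qpoch x q (- Z.of_nat (S k)) = / prodneg x q (S k).
Proof. simpl. rewrite SuccNat2Pos.id_succ. reflexivity. Qed.
Lemma qpoch_rec_pos (x q : C) k : qpoch_rec x q (Z.of_nat k) = / prodpos x q k.
Proof. destruct k. simpl. field; try nz. simpl. rewrite SuccNat2Pos.id_succ. reflexivity. Qed.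
Lemma qpoch_rec_neg (x q : C) k : qpoch_rec x q (- Z.of_nat (S k)) = prodneg x q (S k).
Proof. simpl. rewrite SuccNat2Pos.id_succ. reflexivity. Qed.
Lemma zpow_pos (x : C) k : zpow x (Z.of_nat k) = cpow x k.
Proof. destruct k. reflexivity. simpl. rewrite SuccNat2Pos.id_succ. reflexivity. Qed.
Lemma zpow_neg (x : C) k : zpow x (- Z.of_nat (S k)) = / cpow x (S k).
Proof. simpl. rewrite SuccNat2Pos.id_succ. reflexivity. Qed.

Fixpoint qt (q : C) m : C := match m with O => 1 | S m' => qt q m' * cpow q m' end.

Lemma qt_nz (q : C) m : q <> 0 -> qt q m <> 0.
Proof. intros Hq; induction m; simpl. apply C1_neq_0. apply Cmult_neq_0; [exact IHm | apply cpow_nz; exact Hq]. Qed.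

Lemma cpow_inv (x : C) m : x <> 0 -> cpow (/ x) m = / cpow x m.
Proof. intros Hx; induction m; simpl. field; try nz. rewrite IHm. field; nz. Qed.

Lemma L1 (q x : C) m : q <> 0 -> x <> 0 ->
  prodneg (q/x) q m = cpow (-1) m * / cpow x m / qt q m * prodpos x q m.
Proof.
  intros Hq Hx. induction m. simpl. field; try nz.
  simpl prodneg. rewrite IHm, pp_S. simpl. assert (qt q m <> 0) by (apply qt_nz; auto). field; nz.
Qed.

Lemma L2 (q y : C) m : q <> 0 -> y <> 0 ->
  prodneg (y*q) q m = cpow (-1) m * cpow y m / qt q m * prodpos (/y) q m.
Proof.
  intros Hq Hx. induction m. simpl. field; try nz.
  simpl prodneg. rewrite IHm, pp_S. simpl. assert (qt q m <> 0) by (apply qt_nz; auto). field; nz.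
Qed.

Lemma L3 (q a : C) m : q <> 0 -> a <> 0 ->
  prodneg a q m = cpow (-1) m * cpow a m / (qt q m * cpow q m) * prodpos (q/a) q m.
Proof.
  intros Hq Hx. induction m. simpl. field; try nz.
  simpl prodneg. rewrite IHm, pp_S. simpl. assert (qt q m <> 0) by (apply qt_nz; auto). field; nz.
Qed.

Definition orig (q a b c d e : C) (k : Z) : C :=
  qpoch (q / a) q k * qpoch (q / b) q k * qpoch (q / c) q k *
  qpoch (q / d) q k * qpoch (q / e) q k *
  (qpoch_rec a q k * qpoch_rec (b * q) q k * qpoch_rec (c * q) q k *
   qpoch_rec (d * q) q k * qpoch_rec (e * q) q k) *
  zpow (a * b * c * d * e) k.

Lemma pp_inv_shift (q y : C) k : y <> 0 ->
  prodpos (/y) q (S k) = (1 - /y) * prodpos (q/y) q k.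
Proof. intros Hy. rewrite pp_shift. f_equal. apply pp_arg. unfold Cdiv; ring. Qed.

Lemma fold (q a b c d e : C) k :
  q <> 0 -> a <> 0 -> b <> 0 -> c <> 0 -> d <> 0 -> e <> 0 ->
  1 - a <> 0 -> 1 - b <> 0 -> 1 - c <> 0 -> 1 - d <> 0 -> 1 - e <> 0 ->
  1 - a * cpow q k <> 0 ->
  prodpos (a*q) q k <> 0 -> prodpos (b*q) q k <> 0 -> prodpos (c*q) q k <> 0 ->
  prodpos (d*q) q k <> 0 -> prodpos (e*q) q k <> 0 ->
  orig q a b c d e (Z.of_nat k) + orig q a b c d e (- Z.of_nat (S k)) =
  a / (1 - a) * (vv q a b c k * ff q d e k).
Proof.
  intros Hq Ha Hb Hc Hd He Ha1 Hb1 Hc1 Hd1 He1 HaX Va Vb Vc Vd Ve.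
  unfold orig, vv, ff.
  rewrite !qpoch_pos, !qpoch_neg, !qpoch_rec_pos, !qpoch_rec_neg, zpow_pos, zpow_neg.
  rewrite (L1 q a), (L1 q b), (L1 q c), (L1 q d), (L1 q e) by auto.
  rewrite (L2 q b), (L2 q c), (L2 q d), (L2 q e) by auto.
  rewrite (L3 q a) by auto.
  assert (Ea : prodpos a q k = (1 - a) * prodpos (a*q) q k / (1 - a * cpow q k)).
  { rewrite <- pp_shift, pp_S. field. auto. }
  rewrite (pp_shift a), (pp_shift b), (pp_shift c), (pp_shift d), (pp_shift e).
  rewrite (pp_inv_shift q b), (pp_inv_shift q c), (pp_inv_shift q d), (pp_inv_shift q e) by auto.
  rewrite (pp_S (q/a)).
  rewrite Ea.
  rewrite !cpow_mult.
  simpl cpow.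
  assert (Hs : cpow (-1) k <> 0).
  { apply cpow_nz. intro E. apply C1_neq_0. replace (RtoC 1) with (- (-1)) by ring. rewrite E. ring. }
  assert (HT : qt q (S k) <> 0) by (apply qt_nz; auto).
  field. nz.
Qed.


Lemma Cmod_1_minus (z : C) : (Cmod (1 - z) <= 1 + Cmod z)%R.
Proof.
  unfold Cminus. eapply Rle_trans. apply Cmod_triangle. rewrite Cmod_opp, Cmod_1. lra.
Qed.

Lemma exp_le' (x y : R) : (x <= y)%R -> (exp x <= exp y)%R.
Proof. intros H. destruct (Rle_lt_or_eq_dec _ _ H). apply Rlt_le, exp_increasing; auto. subst; lra. Qed.

Lemma pp_bound_aux (q x : C) N : (Cmod q < 1)%R ->
  (Cmod (prodpos x q N) <= exp (Cmod x * (1 - Cmod q ^ N) / (1 - Cmod q)))%R.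
Proof.
  intros Hq. assert (H0 := Cmod_ge_0 q). assert (Hx := Cmod_ge_0 x).
  induction N.
  - simpl. rewrite Cmod_1. replace (Cmod x * (1 - 1) / (1 - Cmod q))%R with 0%R by (field; lra).
    rewrite exp_0. lra.
  - rewrite pp_S, Cmod_mult.
    replace (Cmod x * (1 - Cmod q ^ S N) / (1 - Cmod q))%R with
      (Cmod x * (1 - Cmod q ^ N) / (1 - Cmod q) + Cmod x * Cmod q ^ N)%R by (simpl; field; lra).
    rewrite exp_plus. apply Rmult_le_compat. apply Cmod_ge_0. apply Cmod_ge_0. exact IHN.
    eapply Rle_trans. apply Cmod_1_minus. rewrite Cmod_mult, Cmod_cpow.
    apply exp_ineq1_le.
Qed.

Lemma pp_bound (q x : C) N : (Cmod q < 1)%R ->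
  (Cmod (prodpos x q N) <= exp (Cmod x / (1 - Cmod q)))%R.
Proof.
  intros Hq. eapply Rle_trans. apply pp_bound_aux; auto.
  apply exp_le'.
  assert (Hr := Cmod_ge_0 q). assert (Hx := Cmod_ge_0 x).
  assert (HrN : (0 <= Cmod q ^ N)%R) by (apply pow_le; auto).
  unfold Rdiv. apply Rmult_le_compat_r. apply Rlt_le, Rinv_0_lt_compat; lra.
  nra.
Qed.

Lemma cauchy_geom (u : nat -> R) (K r : R) : (0 <= r < 1)%R ->
  (forall i, Rabs (u (S i) - u i) <= K * r ^ i)%R -> exists l : R, is_lim_seq u l.
Proof.
  intros Hr Hu.
  set (a := fun i => (u (S i) - u i)%R).
  assert (Ha : ex_series a).
  { apply (@ex_series_le R_AbsRing R_CompleteNormedModule a (fun i => K * r ^ i)%R).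
    intros n. unfold a. apply Hu.
    exists (K * / (1 - r))%R. apply (is_series_scal_l K (fun n => (r ^ n)%R)).
    apply is_series_geom. rewrite Rabs_pos_eq; lra. }
  destruct Ha as [l Hl].
  exists (l + u O)%R.
  apply is_lim_seq_incr_1.
  assert (Hs : forall N, sum_n a N = (u (S N) - u O)%R).
  { induction N. rewrite sum_O. reflexivity. rewrite sum_Sn, IHN. unfold a, plus; simpl. ring. }
  apply (is_lim_seq_ext (fun N => sum_n a N + u O)%R). intros; rewrite Hs; ring.
  apply is_lim_seq_plus'. exact Hl. apply is_lim_seq_const.
Qed.

Definition climit (u : nat -> C) (L : C) :=
  is_lim_seq (fun n => fst (u n)) (fst L) /\ is_lim_seq (fun n => snd (u n)) (snd L).

Lemma pp_climit (q x : C) : (Cmod q < 1)%R -> exists L, climit (fun N => prodpos x q N) L.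
Proof.
  intros Hq.
  set (M := exp (Cmod x / (1 - Cmod q))).
  assert (Hd : forall i, (Cmod (prodpos x q (S i) - prodpos x q i) <= (M * Cmod x) * Cmod q ^ i)%R).
  { intros i. replace (prodpos x q (S i) - prodpos x q i) with (- (prodpos x q i * (x * cpow q i))).
    rewrite Cmod_opp, !Cmod_mult, Cmod_cpow.
    rewrite Rmult_assoc. apply Rmult_le_compat_r.
    apply Rmult_le_pos. apply Cmod_ge_0. apply pow_le, Cmod_ge_0.
    apply pp_bound; auto.
    rewrite pp_S. ring. }
  assert (Hr : (0 <= Cmod q < 1)%R) by (split; auto; apply Cmod_ge_0).
  destruct (cauchy_geom (fun n => fst (prodpos x q n)) (M * Cmod x) (Cmod q) Hr) as [l1 H1].
  { intros i. eapply Rle_trans. 2: apply (Hd i).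
    eapply Rle_trans. 2: apply Rmax_Cmod. simpl. apply Rmax_l. }
  destruct (cauchy_geom (fun n => snd (prodpos x q n)) (M * Cmod x) (Cmod q) Hr) as [l2 H2].
  { intros i. eapply Rle_trans. 2: apply (Hd i).
    eapply Rle_trans. 2: apply Rmax_Cmod. simpl. apply Rmax_r. }
  exists (l1, l2). split; auto.
Qed.

Lemma climit_unique (u : nat -> C) L1 L2 : climit u L1 -> climit u L2 -> L1 = L2.
Proof.
  intros [H1 H2] [H3 H4].
  assert (E1 := is_lim_seq_unique _ _ H1). rewrite (is_lim_seq_unique _ _ H3) in E1.
  assert (E2 := is_lim_seq_unique _ _ H2). rewrite (is_lim_seq_unique _ _ H4) in E2.
  injection E1; injection E2; intros. destruct L1, L2; simpl in *; subst; auto.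
Qed.

Lemma qpoch_inf_climit (q x L : C) : climit (fun N => prodpos x q N) L -> qpoch_inf x q = L.
Proof.
  intros [H1 H2]. unfold qpoch_inf.
  rewrite (is_lim_seq_unique _ _ H1), (is_lim_seq_unique _ _ H2). destruct L; reflexivity.
Qed.

Lemma climit_scal (u : nat -> C) (z L : C) : climit u L -> climit (fun n => z * u n) (z * L).
Proof.
  intros [H1 H2]. split; simpl.
  - apply is_lim_seq_minus'; apply is_lim_seq_mult'; auto; apply is_lim_seq_const.
  - apply is_lim_seq_plus'; apply is_lim_seq_mult'; auto; apply is_lim_seq_const.
Qed.

Lemma climit_shift (u : nat -> C) L m : climit u L -> climit (fun n => u (m + n)%nat) L.
Proof.
  intros [H1 H2]. split.
  - apply (is_lim_seq_incr_n _ m) in H1. eapply is_lim_seq_ext. 2: exact H1. intros; simpl; rewrite Nat.add_comm; auto.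
  - apply (is_lim_seq_incr_n _ m) in H2. eapply is_lim_seq_ext. 2: exact H2. intros; simpl; rewrite Nat.add_comm; auto.
Qed.

Lemma qinf_shift (q x : C) m : (Cmod q < 1)%R ->
  qpoch_inf x q = prodpos x q m * qpoch_inf (x * cpow q m) q.
Proof.
  intros Hq.
  destruct (pp_climit q x Hq) as [L HL].
  destruct (pp_climit q (x * cpow q m) Hq) as [L' HL'].
  rewrite (qpoch_inf_climit _ _ _ HL), (qpoch_inf_climit _ _ _ HL').
  apply (climit_unique (fun n => prodpos x q (m + n))).
  apply climit_shift; auto.
  eapply climit_scal in HL'. destruct HL' as [A1 A2]. split.
  eapply is_lim_seq_ext. 2: exact A1. intros; simpl. rewrite pp_add. reflexivity.
  eapply is_lim_seq_ext. 2: exact A2. intros; simpl. rewrite pp_add. reflexivity.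
Qed.

Lemma Cmod_1_minus_ge (z : C) : (1 - Cmod z <= Cmod (1 - z))%R.
Proof.
  assert (H := Cmod_triangle (1 - z) z). replace (1 - z + z) with (RtoC 1) in H by ring.
  rewrite Cmod_1 in H. lra.
Qed.

Lemma pow_01 (r : R) N : (0 <= r < 1)%R -> (0 <= r ^ N <= 1)%R.
Proof. intros H. destruct N. simpl; lra. assert (H2 := pow_lt_1_compat r (S N) H (Nat.lt_0_succ N)). lra. Qed.

Lemma pp_lower (q y : C) N : (Cmod q < 1)%R -> (Cmod y <= 1)%R ->
  (1 - Cmod y * (1 - Cmod q ^ N) / (1 - Cmod q) <= Cmod (prodpos y q N))%R.
Proof.
  intros Hq Hy. assert (Hr := Cmod_ge_0 q). assert (Hs := Cmod_ge_0 y).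
  induction N.
  - simpl. rewrite Cmod_1. replace (Cmod y * (1 - 1) / (1 - Cmod q))%R with 0%R by (field; lra). lra.
  - rewrite pp_S, Cmod_mult.
    assert (HrN := pow_01 (Cmod q) N (conj Hr Hq)).
    assert (Hf : (1 - Cmod y * Cmod q ^ N <= Cmod (1 - y * cpow q N))%R).
    { eapply Rle_trans. 2: apply Cmod_1_minus_ge. rewrite Cmod_mult, Cmod_cpow. lra. }
    set (A := (1 - Cmod y * (1 - Cmod q ^ N) / (1 - Cmod q))%R) in *.
    replace (1 - Cmod y * (1 - Cmod q ^ S N) / (1 - Cmod q))%R with (A - Cmod y * Cmod q ^ N)%R
      by (unfold A; simpl; field; lra).
    assert (HA1 : (A <= 1)%R).
    { unfold A. assert (0 <= Cmod y * (1 - Cmod q ^ N) / (1 - Cmod q))%R.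
      apply Rmult_le_pos. apply Rmult_le_pos; lra. apply Rlt_le, Rinv_0_lt_compat; lra. lra. }
    assert (Hp := Cmod_ge_0 (prodpos y q N)).
    assert (Hf0 : (0 <= 1 - Cmod y * Cmod q ^ N)%R) by nra.
    set (t := Cmod (prodpos y q N)) in *. set (f := Cmod (1 - y * cpow q N)) in *.
    set (w := (Cmod y * Cmod q ^ N)%R) in *.
    assert (Hw : (0 <= w)%R) by (unfold w; apply Rmult_le_pos; lra).
    destruct (Rle_or_lt 0 A).
    + assert (0 <= (t - A) * f)%R by (apply Rmult_le_pos; lra).
      assert (0 <= A * (f - (1 - w)))%R by (apply Rmult_le_pos; lra).
      assert (0 <= (1 - A) * w)%R by (apply Rmult_le_pos; lra).
      nra.
    + assert (0 <= t * f)%R by (apply Rmult_le_pos; lra). lra.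
Qed.

Lemma climit_nz (u : nat -> C) L : climit u L -> (forall n, / 2 <= Cmod (u n))%R -> L <> 0.
Proof.
  intros [H1 H2] Hb HL. subst L. simpl in H1, H2.
  apply is_lim_seq_spec in H1. apply is_lim_seq_spec in H2.
  assert (He : (0 < / 4)%R) by lra.
  destruct (H1 (mkposreal _ He)) as [N1 HN1].
  destruct (H2 (mkposreal _ He)) as [N2 HN2].
  set (n := (N1 + N2)%nat).
  specialize (HN1 n ltac:(unfold n; lia)). specialize (HN2 n ltac:(unfold n; lia)).
  simpl in HN1, HN2. rewrite Rminus_0_r in HN1, HN2.
  assert (Hm := Cmod_2Rmax (u n)).
  assert (Hs : (sqrt 2 < 2)%R) by (apply sqrt_less; lra).
  assert (Hmax : (Rmax (Rabs (fst (u n))) (Rabs (snd (u n))) < / 4)%R) by (apply Rmax_lub_lt; auto).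
  assert (Hpos := Rlt_sqrt2_0).
  assert (Hmax0 : (0 <= Rmax (Rabs (fst (u n))) (Rabs (snd (u n))))%R).
  { eapply Rle_trans. apply Rabs_pos. apply Rmax_l. }
  specialize (Hb n). nra.
Qed.

Lemma qinf_nz (q x : C) : (Cmod q < 1)%R -> (forall m, prodpos x q m <> 0) -> qpoch_inf x q <> 0.
Proof.
  intros Hq Hx.
  assert (Hr := Cmod_ge_0 q).
  set (s := Cmod x).
  assert (Hs : (0 <= s)%R) by apply Cmod_ge_0.
  assert (Hy : (0 < (1 - Cmod q) / (2 * (s + 1)))%R).
  { apply Rdiv_lt_0_compat; lra. }
  destruct (pow_lt_1_zero (Cmod q) ltac:(rewrite Rabs_pos_eq; lra) _ Hy) as [N0 HN0].
  specialize (HN0 N0 (le_n _)). rewrite Rabs_pos_eq in HN0 by (apply pow_le; lra).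
  set (y := x * cpow q N0).
  assert (Hcy : (Cmod y <= (1 - Cmod q) / 2)%R).
  { unfold y. rewrite Cmod_mult, Cmod_cpow. fold s.
    assert (s * Cmod q ^ N0 <= s * ((1 - Cmod q) / (2 * (s + 1))))%R by (apply Rmult_le_compat_l; lra).
    assert (s * ((1 - Cmod q) / (2 * (s + 1))) <= (1 - Cmod q) / 2)%R.
    { unfold Rdiv. rewrite Rinv_mult. 
      assert (0 < / (s+1))%R by (apply Rinv_0_lt_compat; lra).
      assert (s * / (s + 1) <= 1)%R.
      { apply (Rmult_le_reg_r (s + 1)). lra. rewrite Rmult_assoc, Rinv_l by lra. lra. }
      assert (0 <= (1 - Cmod q) * / 2)%R by lra.
      replace (s * ((1 - Cmod q) * (/ 2 * / (s + 1))))%R with ((s * / (s+1)) * ((1 - Cmod q) * / 2))%R by ring.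
      nra. }
    lra. }
  rewrite (qinf_shift q x N0 Hq). fold y.
  apply Cmult_neq_0. apply Hx.
  destruct (pp_climit q y Hq) as [L HL].
  rewrite (qpoch_inf_climit _ _ _ HL).
  apply (climit_nz _ _ HL).
  intros n. eapply Rle_trans. 2: apply pp_lower; auto; lra.
  assert (HrN := pow_01 (Cmod q) n (conj Hr Hq)).
  assert (Hcy0 := Cmod_ge_0 y).
  assert (Cmod y * (1 - Cmod q ^ n) / (1 - Cmod q) <= / 2)%R.
  { apply (Rmult_le_reg_r (1 - Cmod q)). lra. unfold Rdiv. rewrite Rmult_assoc, Rinv_l by lra.
    nra. }
  lra.
Qed.


Lemma qinf_arg (x y q : C) : x = y -> qpoch_inf x q = qpoch_inf y q.
Proof. intros ->; auto. Qed.

Lemma pp_tail_nz (q x : C) n : (forall m, prodpos x q m <> 0) -> forall m, prodpos (x * cpow q n) q m <> 0.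
Proof. intros H m E. apply (H (n + m)%nat). rewrite pp_add, E. ring. Qed.

Lemma qi_qpow_nz (q : C) n : q <> 0 -> (Cmod q < 1)%R -> qpoch_inf (q * cpow q n) q <> 0.
Proof.
  intros Hq Hq1. apply qinf_nz; auto. intros m.
  rewrite (pp_arg _ (cpow q (S n))) by (simpl; ring). apply pp_qpow_nz; auto; lia.
Qed.

Lemma P_case_a (q a b c : C) n :
  q <> 0 -> (Cmod q < 1)%R -> b <> 0 -> c <> 0 -> a = cpow q (S n) ->
  (forall m, prodpos (b*q) q m <> 0) -> (forall m, prodpos (c*q) q m <> 0) ->
  (forall m, prodpos (a*b*c/q) q m <> 0) ->
  a * (qpoch_inf q q * qpoch_inf (a * b) q * qpoch_inf (b * c) q * qpoch_inf (a * c) q)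
   / (q * (qpoch_inf a q * qpoch_inf (b * q) q * qpoch_inf (c * q) q * qpoch_inf (a * b * c / q) q))
  = a / (1 - a) * QQ q b c n.
Proof.
  intros Hq Hq1 Hb Hc Ha Hbq Hcq Habc.
  assert (HA : a <> 0) by (rewrite Ha; apply cpow_nz; auto).
  assert (HA1 : 1 - a <> 0) by (rewrite Ha; apply omp_nz; auto; lia).
  rewrite (qinf_shift q q (S n) Hq1).
  rewrite (qinf_shift q a 1 Hq1), (qinf_arg (a * cpow q 1) (q * cpow q (S n))) by (rewrite Ha; simpl; ring).
  rewrite (qinf_shift q (b*q) n Hq1), (qinf_arg (a * b) (b * q * cpow q n)) by (rewrite Ha; simpl; ring).
  rewrite (qinf_shift q (c*q) n Hq1), (qinf_arg (a * c) (c * q * cpow q n)) by (rewrite Ha; simpl; ring).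
  rewrite (qinf_shift q (b*c) n Hq1), (qinf_arg (a * b * c / q) (b * c * cpow q n)).
  2: { rewrite Ha. simpl. field. auto. }
  assert (Z1 := qi_qpow_nz q (S n) Hq Hq1).
  assert (Zb : qpoch_inf (b * q * cpow q n) q <> 0) by (apply qinf_nz; auto; apply pp_tail_nz; auto).
  assert (Zc : qpoch_inf (c * q * cpow q n) q <> 0) by (apply qinf_nz; auto; apply pp_tail_nz; auto).
  assert (Zbc : qpoch_inf (b * c * cpow q n) q <> 0).
  { apply qinf_nz; auto. intros m. rewrite (pp_arg _ (a*b*c/q)). apply Habc. rewrite Ha; simpl; field; auto. }
  assert (Pb : prodpos (b*q) q n <> 0) by auto.
  assert (Pc : prodpos (c*q) q n <> 0) by auto.
  unfold QQ.
  set (z1 := qpoch_inf (q * cpow q (S n)) q) in *. set (z2 := qpoch_inf (b * q * cpow q n) q) in *.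
  set (z3 := qpoch_inf (c * q * cpow q n) q) in *. set (z4 := qpoch_inf (b * c * cpow q n) q) in *.
  clearbody z1 z2 z3 z4.
  simpl prodpos. field. nz.
Qed.

Lemma P_case_b (q a b c : C) n :
  q <> 0 -> (Cmod q < 1)%R -> a <> 0 -> c <> 0 -> b = cpow q (S n) ->
  (forall m, prodpos a q m <> 0) -> (forall m, prodpos (c*q) q m <> 0) ->
  (forall m, prodpos (a*b*c/q) q m <> 0) ->
  a * (qpoch_inf q q * qpoch_inf (a * b) q * qpoch_inf (b * c) q * qpoch_inf (a * c) q)
   / (q * (qpoch_inf a q * qpoch_inf (b * q) q * qpoch_inf (c * q) q * qpoch_inf (a * b * c / q) q))
  = a / (1 - a) * QQ q a c n.
Proof.
  intros Hq Hq1 Ha Hc Hb Haa Hcq Habc.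
  assert (HA1 : 1 - a <> 0) by (intro E; apply (Haa 1%nat); simpl; rewrite <- E; ring).
  rewrite (qinf_shift q q (S n) Hq1), (qinf_arg (b * q) (q * cpow q (S n))) by (rewrite Hb; simpl; ring).
  rewrite (qinf_shift q a (S n) Hq1), (qinf_arg (a * b) (a * cpow q (S n))) by (rewrite Hb; simpl; ring).
  rewrite (qinf_shift q (c*q) n Hq1), (qinf_arg (b * c) (c * q * cpow q n)) by (rewrite Hb; simpl; ring).
  rewrite (qinf_shift q (a*c) n Hq1), (qinf_arg (a * b * c / q) (a * c * cpow q n)).
  2: { rewrite Hb. simpl. field. auto. }
  assert (Z1 := qi_qpow_nz q (S n) Hq Hq1).
  assert (Za : qpoch_inf (a * cpow q (S n)) q <> 0) by (apply qinf_nz; auto; apply pp_tail_nz; auto).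
  assert (Zc : qpoch_inf (c * q * cpow q n) q <> 0) by (apply qinf_nz; auto; apply pp_tail_nz; auto).
  assert (Zac : qpoch_inf (a * c * cpow q n) q <> 0).
  { apply qinf_nz; auto. intros m. rewrite (pp_arg _ (a*b*c/q)). apply Habc. rewrite Hb; simpl; field; auto. }
  assert (Pa : prodpos (a*q) q n <> 0) by (intro E; apply (Haa (S n)); rewrite pp_shift, E; ring).
  assert (Pc : prodpos (c*q) q n <> 0) by auto.
  rewrite (pp_shift a q n).
  unfold QQ.
  set (z1 := qpoch_inf (q * cpow q (S n)) q) in *. set (z2 := qpoch_inf (a * cpow q (S n)) q) in *.
  set (z3 := qpoch_inf (c * q * cpow q n) q) in *. set (z4 := qpoch_inf (a * c * cpow q n) q) in *.
  clearbody z1 z2 z3 z4.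
  field. nz.
Qed.

Lemma P_case_c (q a b c : C) n :
  q <> 0 -> (Cmod q < 1)%R -> a <> 0 -> b <> 0 -> c = cpow q (S n) ->
  (forall m, prodpos a q m <> 0) -> (forall m, prodpos (b*q) q m <> 0) ->
  (forall m, prodpos (a*b*c/q) q m <> 0) ->
  a * (qpoch_inf q q * qpoch_inf (a * b) q * qpoch_inf (b * c) q * qpoch_inf (a * c) q)
   / (q * (qpoch_inf a q * qpoch_inf (b * q) q * qpoch_inf (c * q) q * qpoch_inf (a * b * c / q) q))
  = a / (1 - a) * QQ q a b n.
Proof.
  intros Hq Hq1 Ha Hb Hc Haa Hbq Habc.
  assert (HA1 : 1 - a <> 0) by (intro E; apply (Haa 1%nat); simpl; rewrite <- E; ring).
  rewrite (qinf_shift q q (S n) Hq1), (qinf_arg (c * q) (q * cpow q (S n))) by (rewrite Hc; simpl; ring).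
  rewrite (qinf_shift q a (S n) Hq1), (qinf_arg (a * c) (a * cpow q (S n))) by (rewrite Hc; simpl; ring).
  rewrite (qinf_shift q (b*q) n Hq1), (qinf_arg (b * c) (b * q * cpow q n)) by (rewrite Hc; simpl; ring).
  rewrite (qinf_shift q (a*b) n Hq1), (qinf_arg (a * b * c / q) (a * b * cpow q n)).
  2: { rewrite Hc. simpl. field. auto. }
  assert (Z1 := qi_qpow_nz q (S n) Hq Hq1).
  assert (Za : qpoch_inf (a * cpow q (S n)) q <> 0) by (apply qinf_nz; auto; apply pp_tail_nz; auto).
  assert (Zb : qpoch_inf (b * q * cpow q n) q <> 0) by (apply qinf_nz; auto; apply pp_tail_nz; auto).
  assert (Zab : qpoch_inf (a * b * cpow q n) q <> 0).
  { apply qinf_nz; auto. intros m. rewrite (pp_arg _ (a*b*c/q)). apply Habc. rewrite Hc; simpl; field; auto. }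
  assert (Pa : prodpos (a*q) q n <> 0) by (intro E; apply (Haa (S n)); rewrite pp_shift, E; ring).
  assert (Pb : prodpos (b*q) q n <> 0) by auto.
  rewrite (pp_shift a q n).
  unfold QQ.
  set (z1 := qpoch_inf (q * cpow q (S n)) q) in *. set (z2 := qpoch_inf (a * cpow q (S n)) q) in *.
  set (z3 := qpoch_inf (b * q * cpow q n) q) in *. set (z4 := qpoch_inf (a * b * cpow q n) q) in *.
  clearbody z1 z2 z3 z4.
  field. nz.
Qed.


Lemma sum_n_csum (f : nat -> C) m : sum_n f m = csum f (S m).
Proof.
  induction m. rewrite sum_O. simpl. ring.
  rewrite sum_Sn, IHm. reflexivity.
Qed.

Lemma is_series_fin (f : nat -> C) N : (forall i, (N <= i)%nat -> f i = 0) -> is_series f (csum f N).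
Proof.
  intros H. unfold is_series.
  apply (filterlim_ext_loc (fun _ => csum f N)).
  exists N. intros m Hm. rewrite sum_n_csum. symmetry. apply csum_extend; auto.
  apply filterlim_const.
Qed.

Lemma pn_S (x q : C) m : prodneg x q (S m) = prodneg x q m * (1 - x / cpow q (S m)).
Proof. reflexivity. Qed.

Lemma pn_zero (x q : C) N i : (1 <= i <= N)%nat -> 1 - x / cpow q i = 0 -> prodneg x q N = 0.
Proof.
  intros [H1 H2] H. induction H2.
  - destruct i. lia. rewrite pn_S, H. ring.
  - rewrite pn_S, IHle. ring.
Qed.

Lemma pp_qa_zero (q x : C) n k : q <> 0 -> x = cpow q (S n) -> (S n <= k)%nat -> prodpos (q / x) q k = 0.
Proof.
  intros Hq Hx Hk. apply (pp_zero _ _ k n); [rewrite Hx; simpl; field; nz | lia].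
Qed.

Lemma vv_swap12 (q A B C : C) k : vv q A B C k = vv q B A C k.
Proof. unfold vv. replace (B*A*C) with (A*B*C) by ring.
  replace (prodpos (B * q) q k * prodpos (A * q) q k * prodpos (C * q) q k) with
    (prodpos (A * q) q k * prodpos (B * q) q k * prodpos (C * q) q k) by ring.
  unfold Cdiv; ring. Qed.
Lemma vv_cyc (q A B C : C) k : vv q A B C k = vv q C A B k.
Proof. unfold vv. replace (C*A*B) with (A*B*C) by ring.
  replace (prodpos (C * q) q k * prodpos (A * q) q k * prodpos (B * q) q k) with
    (prodpos (A * q) q k * prodpos (B * q) q k * prodpos (C * q) q k) by ring.
  unfold Cdiv; ring. Qed.
Lemma cc_swap12 (q A B C : C) k : cc q A B C k = cc q B A C k.
Proof. unfold cc. replace (B*A*C) with (A*B*C) by ring. unfold Cdiv; ring. Qed.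
Lemma cc_cyc (q A B C : C) k : cc q A B C k = cc q C A B k.
Proof. unfold cc. replace (C*A*B) with (A*B*C) by ring. unfold Cdiv; ring. Qed.

Lemma one_minus_pn (q x : C) : q <> 0 -> x <> 0 -> prodneg (q / x) q 1 <> 0 -> 1 - x <> 0.
Proof.
  intros Hq Hx H E. apply H. simpl. apply one_minus_0 in E. subst x.
  field. auto.
Qed.

Lemma key_identity (q a b c d e : C) n :
  q <> 0 -> (Cmod q < 1)%R ->
  (a = cpow q (S n) \/ b = cpow q (S n) \/ c = cpow q (S n)) ->
  a <> 0 -> b <> 0 -> c <> 0 -> d <> 0 -> e <> 0 ->
  (forall m, prodpos a q m <> 0) -> (forall m, prodpos (b*q) q m <> 0) ->
  (forall m, prodpos (c*q) q m <> 0) -> (forall m, prodpos (d*q) q m <> 0) ->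
  (forall m, prodpos (e*q) q m <> 0) ->
  (forall m, prodpos (q*q/(a*b*c)) q m <> 0) -> (forall m, prodpos (a*b*c/q) q m <> 0) ->
  exists Qv,
    csum (fun k => vv q a b c k * ff q d e k) (S n) = Qv * csum (fun j => cc q a b c j * hh q d e j) (S n) /\
    a * (qpoch_inf q q * qpoch_inf (a * b) q * qpoch_inf (b * c) q * qpoch_inf (a * c) q)
     / (q * (qpoch_inf a q * qpoch_inf (b * q) q * qpoch_inf (c * q) q * qpoch_inf (a * b * c / q) q))
    = a / (1 - a) * Qv.
Proof.
  intros Hq Hq1 Hcase Ha Hb Hc Hd He Hpa Hpb Hpc Hpd Hpe Hp2 Hp3.
  assert (Hpa' : forall m, prodpos (a*q) q m <> 0).
  { intros m E. apply (Hpa (S m)). rewrite pp_shift, E. ring. }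
  destruct Hcase as [Hca | [Hcb | Hcc]].
  - exists (QQ q b c n). split.
    + rewrite Hca. apply core_main; auto. intros m. rewrite <- Hca. auto.
    + apply P_case_a; auto.
  - exists (QQ q a c n). split.
    + rewrite (csum_ext _ (fun k => vv q b a c k * ff q d e k)) by (intros; rewrite vv_swap12; auto).
      rewrite (csum_ext (fun j => cc q a b c j * hh q d e j) (fun j => cc q b a c j * hh q d e j))
        by (intros; rewrite cc_swap12; auto).
      rewrite Hcb. apply core_main; auto. intros m. rewrite (pp_arg _ (q*q/(a*b*c))). apply Hp2.
      rewrite Hcb. field; nz.
    + apply P_case_b; auto.
  - exists (QQ q a b n). split.
    + rewrite (csum_ext _ (fun k => vv q c a b k * ff q d e k)) by (intros; rewrite vv_cyc; auto).
      rewrite (csum_ext (fun j => cc q a b c j * hh q d e j) (fun j => cc q c a b j * hh q d e j))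
        by (intros; rewrite cc_cyc; auto).
      rewrite Hcc. apply core_main; auto. intros m. rewrite (pp_arg _ (q*q/(a*b*c))). apply Hp2.
      rewrite Hcc. field; nz.
    + apply P_case_c; auto.
Qed.

Theorem mainTheorem7 (q a b c d e : C) :
  0 < Cmod q -> Cmod q < 1 ->
  (exists n : nat, (1 <= n)%nat /\
     (a = cpow q n \/ b = cpow q n \/ c = cpow q n)) ->
  (* all terms are well defined *)
  a <> 0 -> b <> 0 -> c <> 0 -> d <> 0 -> e <> 0 ->
  (forall m : nat,
     prodneg (q / a) q m <> 0 /\ prodneg (q / b) q m <> 0 /\
     prodneg (q / c) q m <> 0 /\ prodneg (q / d) q m <> 0 /\
     prodneg (q / e) q m <> 0) ->
  (forall m : nat,
     prodpos a q m <> 0 /\ prodpos (b * q) q m <> 0 /\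
     prodpos (c * q) q m <> 0 /\ prodpos (d * q) q m <> 0 /\
     prodpos (e * q) q m <> 0) ->
  (forall m : nat,
     prodpos q q m <> 0 /\ prodpos (q * q / (a * b * c)) q m <> 0 /\
     prodpos (a * b * c / q) q m <> 0) ->
  exists T : C,
  is_series
    (fun k : nat =>
       qpoch (q / a) q (Z.of_nat k) * qpoch (q / b) q (Z.of_nat k) *
       qpoch (q / c) q (Z.of_nat k) * qpoch (d * e) q (Z.of_nat k) /
       (qpoch q q (Z.of_nat k) * qpoch (q * q / (a * b * c)) q (Z.of_nat k) *
        qpoch (d * q) q (Z.of_nat k) * qpoch (e * q) q (Z.of_nat k)) *
       cpow q k) T /\
  is_bilateral_series
    (fun k : Z =>
       qpoch (q / a) q k * qpoch (q / b) q k * qpoch (q / c) q k *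
       qpoch (q / d) q k * qpoch (q / e) q k *
       (qpoch_rec a q k * qpoch_rec (b * q) q k * qpoch_rec (c * q) q k *
        qpoch_rec (d * q) q k * qpoch_rec (e * q) q k) *
       zpow (a * b * c * d * e) k)
    (a * (qpoch_inf q q * qpoch_inf (a * b) q * qpoch_inf (b * c) q *
          qpoch_inf (a * c) q)
     / (q * (qpoch_inf a q * qpoch_inf (b * q) q * qpoch_inf (c * q) q *
             qpoch_inf (a * b * c / q) q))
     * T).
Proof.
  intros Hq0 Hq1 [n0 [Hn Hcase]] Ha Hb Hc Hd He Hneg Hpos Hpos2.
  assert (Hq : q <> 0) by (apply Cmod_gt_0; exact Hq0).
  destruct n0 as [|n]. lia. clear Hn.
  assert (Hpa : forall m, prodpos a q m <> 0) by (intros m; apply (Hpos m)).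
  assert (Hpb : forall m, prodpos (b*q) q m <> 0) by (intros m; apply (Hpos m)).
  assert (Hpc : forall m, prodpos (c*q) q m <> 0) by (intros m; apply (Hpos m)).
  assert (Hpd : forall m, prodpos (d*q) q m <> 0) by (intros m; apply (Hpos m)).
  assert (Hpe : forall m, prodpos (e*q) q m <> 0) by (intros m; apply (Hpos m)).
  assert (Hpq : forall m, prodpos q q m <> 0) by (intros m; apply (Hpos2 m)).
  assert (Hp2 : forall m, prodpos (q*q/(a*b*c)) q m <> 0) by (intros m; apply (Hpos2 m)).
  assert (Hp3 : forall m, prodpos (a*b*c/q) q m <> 0) by (intros m; apply (Hpos2 m)).
  assert (Ha1 : 1 - a <> 0).
  { intro E. apply (Hpa 1%nat). simpl. rewrite <- E. ring. }
  assert (Hb1 : 1 - b <> 0) by (apply (one_minus_pn q); auto; apply (Hneg 1%nat)).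
  assert (Hc1 : 1 - c <> 0) by (apply (one_minus_pn q); auto; apply (Hneg 1%nat)).
  assert (Hd1 : 1 - d <> 0) by (apply (one_minus_pn q); auto; apply (Hneg 1%nat)).
  assert (He1 : 1 - e <> 0) by (apply (one_minus_pn q); auto; apply (Hneg 1%nat)).
  destruct (key_identity q a b c d e n Hq Hq1 Hcase Ha Hb Hc Hd He Hpa Hpb Hpc Hpd Hpe Hp2 Hp3)
    as [Qv [HQ1 HQ2]].
  assert (Hvan : forall k, (S n <= k)%nat ->
     prodpos (q / a) q k * prodpos (q / b) q k * prodpos (q / c) q k = 0).
  { intros k Hk. destruct Hcase as [H | [H | H]].
    - rewrite (pp_qa_zero q a n k); auto. ring.
    - rewrite (pp_qa_zero q b n k); auto. ring.
    - rewrite (pp_qa_zero q c n k); auto. ring. }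
  set (Tt := fun k : nat =>
       qpoch (q / a) q (Z.of_nat k) * qpoch (q / b) q (Z.of_nat k) *
       qpoch (q / c) q (Z.of_nat k) * qpoch (d * e) q (Z.of_nat k) /
       (qpoch q q (Z.of_nat k) * qpoch (q * q / (a * b * c)) q (Z.of_nat k) *
        qpoch (d * q) q (Z.of_nat k) * qpoch (e * q) q (Z.of_nat k)) *
       cpow q k).
  exists (csum Tt (S n)). split.
  { apply is_series_fin. intros k Hk. unfold Tt. rewrite !qpoch_pos.
    specialize (Hvan k Hk).
    transitivity ((prodpos (q / a) q k * prodpos (q / b) q k * prodpos (q / c) q k) *
       (prodpos (d * e) q k / (prodpos q q k * prodpos (q * q / (a * b * c)) q k *
        prodpos (d * q) q k * prodpos (e * q) q k) * cpow q k)). unfold Cdiv; ring.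
    rewrite Hvan. ring. }
  unfold is_bilateral_series.
  exists (csum (fun k => orig q a b c d e (Z.of_nat k)) (S n)).
  exists (csum (fun k => orig q a b c d e (- Z.of_nat (S k))) (S n)).
  split.
  { apply is_series_fin. intros k Hk. unfold orig. rewrite !qpoch_pos.
    destruct Hcase as [H | [H | H]].
    - rewrite (pp_qa_zero q a n k); auto. unfold Cdiv; ring.
    - rewrite (pp_qa_zero q b n k); auto. unfold Cdiv; ring.
    - rewrite (pp_qa_zero q c n k); auto. unfold Cdiv; ring. }
  split.
  { apply is_series_fin. intros k Hk. unfold orig. rewrite !qpoch_rec_neg.
    destruct Hcase as [H | [H | H]].
    - rewrite (pn_zero a q (S k) (S n)). unfold Cdiv; ring. lia. rewrite H. field; nz.
    - rewrite (pn_zero (b*q) q (S k) (S (S n))). unfold Cdiv; ring. lia. rewrite H. simpl. field; nz.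
    - rewrite (pn_zero (c*q) q (S k) (S (S n))). unfold Cdiv; ring. lia. rewrite H. simpl. field; nz. }
  assert (Hsum : csum (fun k => orig q a b c d e (Z.of_nat k)) (S n) +
                 csum (fun k => orig q a b c d e (- Z.of_nat (S k))) (S n) =
                 a / (1 - a) * csum (fun k => vv q a b c k * ff q d e k) (S n)).
  { rewrite <- csum_plus, <- csum_scal. apply csum_ext. intros k _. apply fold; auto.
    destruct (pp_nz_S _ _ _ (Hpa (S k))) as [_ Q]. auto.
    intro E. apply (Hpa (S k)). rewrite pp_shift, E. ring. }
  assert (HT : csum Tt (S n) = csum (fun j => cc q a b c j * hh q d e j) (S n)).
  { apply csum_ext. intros j _. unfold Tt, cc, hh. rewrite !qpoch_pos.
    assert (prodpos q q j <> 0) by auto.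
    assert (prodpos (q * q / (a * b * c)) q j <> 0) by auto.
    assert (prodpos (d * q) q j <> 0) by auto.
    assert (prodpos (e * q) q j <> 0) by auto.
    field. nz. }
  rewrite Hsum, HT, HQ1, HQ2. ring.
Qed.
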